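(* For every positive integer $n$, $$\big((\mathrm{Id}\cdot\varphi)\ast\delta\big)(n)=n\,\delta(n)-\big(\mathrm{Id}\ast(\varphi\delta)\big)(n),$$ where $\mathrm{Id}\cdot\varphi$ is $n\mapsto n\varphi(n)$ and $\varphi\delta$ is the pointwise product.
   Context: The arithmetic derivative $\delta$ is defined by $\delta(p)=1$ for every prime $p$ and $\delta(mn)=m\delta(n)+n\delta(m)$ for all positive integers $m,n$; equivalently $\delta(1)=0$ and $\delta(n)=n\sum_{p^\alpha\| n}\alpha/p$. $\mathrm{Id}(n)=n$, $\varphi$ is Euler's totient function. The Dirichlet convolution is $(u\ast v)(n)=\sum_{d\mid n}u(d)v(n/d)$. *)

(* Defs.v *)
From mathcomp Require Import all_boot all_order all_algebra.
Set Implicit Arguments. Unset Strict Implicit. Unset Printing Implicit Defensive.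
Import GRing.Theory Num.Theory.
Local Open Scope ring_scope.

(* Arithmetic derivative: delta(0)=0 (convention, unused), delta(1)=0,
   delta(n) = n * sum_{p^a || n} a/p = sum_{p | n} a * (n/p)  (exact in nat). *)
Definition arith_deriv (n : nat) : nat :=
  (\sum_(p <- primes n) logn p n * (n %/ p))%N.

Definition dconv (u v : nat -> int) (n : nat) : int :=
  \sum_(d <- divisors n) u d * v (n %/ d)%N.

(* Main.v *)
Require Import Defs.
From mathcomp Require Import all_boot all_order all_algebra all_fingroup all_solvable.
From mathcomp Require Import zify.
Import GRing.Theory.
Local Open Scope ring_scope.

Lemma aderivE n N : (0 < n)%N -> (n < N)%N ->
  arith_deriv n = (\sum_(p <- iota 0 N) logn p n * (n %/ p))%N.
Proof.
move=> n0 nN; rewrite /arith_deriv [RHS](bigID (fun p => p \in primes n)) /=.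
rewrite [X in (_ + X)%N]big1 ?addn0; last first.
  by move=> p; rewrite -logn_gt0 -leqNgt leqn0 => /eqP ->.
rewrite -[in RHS]big_filter; apply: perm_big; apply: uniq_perm.
- exact: primes_uniq.
- by rewrite filter_uniq // iota_uniq.
move=> p; rewrite mem_filter mem_iota /= andbC add0n.
case pn: (p \in primes n); rewrite /= ?andbF ?andbT //.
move: pn; rewrite mem_primes => /and3P [_ _ /dvdn_leq] => /(_ n0) pn.
by rewrite (leq_ltn_trans pn nN).
Qed.

Lemma aderivM m n : (0 < m)%N -> (0 < n)%N ->
  arith_deriv (m * n) = (m * arith_deriv n + n * arith_deriv m)%N.
Proof.
move=> m0 n0; have mn0 : (0 < m * n)%N by rewrite muln_gt0 m0.
have hm : (m < (m * n).+1)%N by rewrite ltnS leq_pmulr.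
have hn : (n < (m * n).+1)%N by rewrite ltnS leq_pmull.
rewrite (@aderivE _ _ mn0 (ltnSn _)) (@aderivE _ _ m0 hm) (@aderivE _ _ n0 hn).
rewrite !big_distrr -big_split /=; apply: eq_bigr => p _.
rewrite lognM // mulnDl addnC; congr (_ + _)%N.
- case: (posnP (logn p n)) => [-> | ]; first by rewrite !muln0 mul0n.
  rewrite logn_gt0 mem_primes => /and3P [_ _ pn].
  by rewrite -muln_divA // mulnCA.
- case: (posnP (logn p m)) => [-> | ]; first by rewrite !muln0 mul0n.
  rewrite logn_gt0 mem_primes => /and3P [_ _ pm].
  by rewrite [(m * n)%N]mulnC -muln_divA // mulnCA.
Qed.

Lemma divdiv n a : (0 < n)%N -> (a %| n)%N -> (n %/ (n %/ a))%N = a.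
Proof.
move=> n0 an; have a0 : (0 < a)%N by apply: dvdn_gt0 an.
by rewrite -{1}(divnK an) mulKn // divn_gt0 // dvdn_leq.
Qed.

Lemma divisors_reindex (F : nat -> int) n : (0 < n)%N ->
  \sum_(d <- divisors n) F d = \sum_(d <- divisors n) F (n %/ d)%N.
Proof.
move=> n0; rewrite -(big_map (fun d => n %/ d)%N xpredT F).
apply: perm_big; apply: uniq_perm; first exact: divisors_uniq.
  rewrite map_inj_in_uniq ?divisors_uniq // => a b.
  rewrite -!dvdn_divisors // => an bn e.
  by rewrite -(@divdiv _ _ n0 an) -(@divdiv _ _ n0 bn) e.
move=> d; apply/idP/mapP.
  rewrite -dvdn_divisors // => dn; exists (n %/ d)%N.
    by rewrite -dvdn_divisors // dvdn_div.
  by rewrite divdiv.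
by case=> e; rewrite -!dvdn_divisors // => en ->; rewrite dvdn_div.
Qed.

Lemma sum_tot_div n : (0 < n)%N -> (\sum_(d <- divisors n) totient d)%N = n.
Proof.
move=> n0; rewrite -{2}(sum_totient_dvd n) -(big_mkord (fun d => d %| n)%N).
rewrite -[in RHS]big_filter; apply: perm_big; apply: uniq_perm.
- exact: divisors_uniq.
- by rewrite filter_uniq // iota_uniq.
move=> d; rewrite mem_filter mem_iota add0n -dvdn_divisors //.
case dn: (d %| n)%N => //=; by rewrite ltnS dvdn_leq.
Qed.

Theorem corollary2p7 (n : nat) : (0 < n)%N ->
  dconv (fun k => (k * totient k)%:R) (fun k => (arith_deriv k)%:R) n
  = (n * arith_deriv n)%:R
    - dconv (fun k => k%:R) (fun k => (totient k * arith_deriv k)%:R) n.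
Proof.
move=> n0; apply/eqP; rewrite eq_sym subr_eq; apply/eqP; rewrite /dconv.
rewrite [X in _ = _ + X](@divisors_reindex _ _ n0) -big_split /= big_seq.
rewrite (eq_bigr (fun d => (totient d * arith_deriv n)%:R)); last first.
  move=> d; rewrite -dvdn_divisors // => dn.
  have d0 : (0 < d)%N by apply: dvdn_gt0 dn.
  have e0 : (0 < n %/ d)%N by rewrite divn_gt0 // dvdn_leq.
  rewrite divdiv // -!natrM -natrD.
  have -> : arith_deriv n = (d * arith_deriv (n %/ d) + (n %/ d) * arith_deriv d)%N.
    by rewrite -{1}(divnK dn) mulnC aderivM.
  congr (_%:R); rewrite mulnDr !mulnA [(totient d * d)%N]mulnC; congr (_ + _)%N.
  by rewrite (mulnC (n %/ d)%N).
rewrite -big_seq -natr_sum -big_distrl /= sum_tot_div //.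
Qed.
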